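(* Fix integers $N\ge1$, $K\ge1$, and for each $k\in\{1,\dots,K\}$ parameters $\theta_k>0$, $a_k>0$, $\rho_k\in[0,1]$; let $\sigma_v,\sigma_u,\sigma_\eta,\sigma_\nu>0$ and $\bar\rho=K^{-1}\sum_k\rho_k$. For $\phi\in[0,1]$ let $\lambda(\phi)=\frac{\sigma_v}{2\sigma_u}\big(1+\phi^2\bar\rho^2\sigma_\eta^2/\sigma_v^2\big)^{-1/2}$ and $\delta_k(\phi)=N\phi a_k\rho_k/\lambda(\phi)$. Define the cross-sectional dispersion of AI fund returns $$D(\phi)=\sqrt{\sum_{k=1}^K\frac{(1-\rho_k^2)\sigma_\nu^2a_k^2}{\left[\theta_k+\delta_k(\phi)\right]^2}}.$$ Then $D(\phi)$ is monotonically decreasing in $\phi$, and in the monoculture limit ($\phi\to1$ and $\rho_k\to1$ for all $k$), $D\to 0$.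
   Context: In the model, $D(\phi)$ is the paper's expression for $\sqrt{\operatorname{Var}_i[\sum_k\alpha_{i,k}(\phi)]}$, the cross-sectional standard deviation over AI investors $i$ of their total alpha; $\sigma_\nu^2$ is the variance of the idiosyncratic noise in AI signals, $\rho_k$ the algorithmic homogeneity of signal $k$, $a_k$ the aggressiveness parameter, $\theta_k$ the natural mean-reversion rate of signal $k$, $\phi$ the AI adoption rate among $N$ investors, $\sigma_u^2$ noise-trader variance, $\sigma_v$ fundamental volatility, $\sigma_\eta^2$ common AI noise variance. *)

(* Defs.v *)
From HB Require Import structures.
From mathcomp Require Import all_boot all_order all_algebra.
From mathcomp Require Import reals.
Set Implicit Arguments. Unset Strict Implicit. Unset Printing Implicit Defensive.
Import Order.TTheory GRing.Theory Num.Theory.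
Local Open Scope ring_scope.

Section Model.
Variable R : realType.

Definition rho_bar (K : nat) (rho : 'I_K -> R) : R :=
  (K%:R)^-1 * \sum_(k < K) rho k.

Definition lambda (K : nat) (rho : 'I_K -> R) (sv su se : R) (phi : R) : R :=
  sv / (2 * su) / Num.sqrt (1 + phi ^+ 2 * (rho_bar rho) ^+ 2 * se ^+ 2 / sv ^+ 2).

Definition delta (N K : nat) (a rho : 'I_K -> R) (sv su se : R) (phi : R)
  (k : 'I_K) : R :=
  N%:R * phi * a k * rho k / lambda rho sv su se phi.

Definition Disp (N K : nat) (theta a rho : 'I_K -> R) (sv su se snu : R)
  (phi : R) : R :=
  Num.sqrt (\sum_(k < K)
     ((1 - rho k ^+ 2) * snu ^+ 2 * a k ^+ 2 /
       (theta k + delta N a rho sv su se phi k) ^+ 2)).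

End Model.

(* Main.v *)
Require Import Defs.
From HB Require Import structures.
From mathcomp Require Import all_boot all_order all_algebra.
From mathcomp Require Import reals.
From mathcomp Require Import ring lra.
Import Order.TTheory GRing.Theory Num.Theory.
Local Open Scope ring_scope.

Section H.
Variable R : realType.

Lemma Q4 (p q r s : R) : 0 <= p ^+ 2 * q ^+ 2 * r ^+ 2 / s ^+ 2.
Proof. by rewrite divr_ge0 ?sqr_ge0 // mulr_ge0 ?sqr_ge0 // mulr_ge0 ?sqr_ge0. Qed.

Lemma div_sq_anti (x y1 y2 : R) : 0 <= x -> 0 < y1 -> y1 <= y2 ->
  x / y2 ^+ 2 <= x / y1 ^+ 2.
Proof.
move=> hx hy1 hy12.
have hy2 : 0 < y2 by apply: lt_le_trans hy12.
apply: ler_wpM2l => //.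
rewrite lef_pV2 ?posrE ?exprn_gt0 //.
nra.
Qed.

Lemma delta_eq (N K : nat) (a rho : 'I_K -> R) sv su se phi k :
  0 < sv -> 0 < su ->
  delta N a rho sv su se phi k =
  (N%:R * a k * rho k * (2 * su / sv)) *
  (phi * Num.sqrt (1 + phi ^+ 2 * (rho_bar rho) ^+ 2 * se ^+ 2 / sv ^+ 2)).
Proof.
move=> hsv hsu.
rewrite /delta /lambda.
set s := Num.sqrt _.
have hs : 0 < s.
  rewrite /s sqrtr_gt0; have : 0 <= phi ^+ 2 * rho_bar rho ^+ 2 * se ^+ 2 / sv ^+ 2.
    exact: Q4.
  lra.
field.
by rewrite !gt_eqF.
Qed.

Lemma sq_mono (phi1 phi2 Q : R) : 0 <= phi1 -> phi1 <= phi2 -> 0 <= Q ->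
  phi1 * Num.sqrt (1 + phi1 ^+ 2 * Q) <= phi2 * Num.sqrt (1 + phi2 ^+ 2 * Q).
Proof.
move=> h1 h12 hQ.
have hs : Num.sqrt (1 + phi1 ^+ 2 * Q) <= Num.sqrt (1 + phi2 ^+ 2 * Q).
  rewrite ler_sqrt; last by rewrite addr_ge0 // mulr_ge0 // sqr_ge0.
  by rewrite lerD2l ler_wpM2r // ler_pXn2r // nnegrE; lra.
have := sqrtr_ge0 (1 + phi1 ^+ 2 * Q).
nra.
Qed.

End H.

Theorem corollary1 (R : realType) (N K : nat) (hN : (1 <= N)%N) (hK : (1 <= K)%N)
  (theta a : 'I_K -> R) (sv su se snu : R)
  (htheta : forall k, 0 < theta k) (ha : forall k, 0 < a k)
  (hsv : 0 < sv) (hsu : 0 < su) (hse : 0 < se) (hsnu : 0 < snu) :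
  (* (i) D is monotonically (weakly) decreasing in phi on [0,1], for every rho in [0,1]^K *)
  (forall rho : 'I_K -> R, (forall k, 0 <= rho k <= 1) ->
     forall phi1 phi2 : R, 0 <= phi1 -> phi1 <= phi2 -> phi2 <= 1 ->
       Disp N theta a rho sv su se snu phi2 <= Disp N theta a rho sv su se snu phi1)
  /\
  (* (ii) monoculture limit: D -> 0 as phi -> 1 and rho_k -> 1 for all k (jointly) *)
  (forall eps : R, 0 < eps -> exists2 del : R, 0 < del &
     forall (phi : R) (rho : 'I_K -> R),
       0 <= phi <= 1 -> (forall k, 0 <= rho k <= 1) ->
       `|1 - phi| < del -> (forall k, `|1 - rho k| < del) ->
       `|Disp N theta a rho sv su se snu phi| < eps).
Proof.
have Cpos : 0 <= 2 * su / sv by apply: divr_ge0; [apply: mulr_ge0; lra | lra].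
have Apos : forall (rho : 'I_K -> R) k, 0 <= rho k ->
    0 <= N%:R * a k * rho k * (2 * su / sv).
  move=> rho k hr; apply: mulr_ge0 => //; apply: mulr_ge0 => //; apply: mulr_ge0 => //; exact: ltW.
have Qpos : forall (rho : 'I_K -> R), 0 <= rho_bar rho ^+ 2 * se ^+ 2 / sv ^+ 2.
  move=> rho; rewrite -mulrA; apply: mulr_ge0; first exact: sqr_ge0.
  by rewrite divr_ge0 ?sqr_ge0.
have dge0 : forall (rho : 'I_K -> R) phi k, 0 <= rho k -> 0 <= phi ->
    0 <= delta N a rho sv su se phi k.
  move=> rho phi k hr hp; rewrite delta_eq //.
  by rewrite mulr_ge0 ?Apos // mulr_ge0 // sqrtr_ge0.
have numge0 : forall (rho : 'I_K -> R) k, 0 <= rho k <= 1 ->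
    0 <= (1 - rho k ^+ 2) * snu ^+ 2 * a k ^+ 2.
  move=> rho k /andP[h0 h1]; apply: mulr_ge0; last exact: sqr_ge0.
  apply: mulr_ge0; last exact: sqr_ge0; nra.
split.
  move=> rho hr phi1 phi2 h1 h12 h2.
  rewrite /Disp ler_sqrt; last first.
    apply: sumr_ge0 => k _; apply: divr_ge0; [exact: numge0 | exact: sqr_ge0].
  apply: ler_sum => k _.
  have [r0 r1] := andP (hr k).
  apply: div_sq_anti; first exact: numge0.
    have := dge0 rho phi1 k r0 h1; have := htheta k; lra.
  rewrite lerD2l !delta_eq // ler_wpM2l ?Apos //.
  by have := @sq_mono R _ _ _ h1 h12 (Qpos rho); rewrite !mulrA.
move=> eps heps.
set M := \sum_(k < K) (snu ^+ 2 * a k ^+ 2 / theta k ^+ 2).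
have hM : 0 <= M.
  apply: sumr_ge0 => k _; apply: divr_ge0; last exact: sqr_ge0.
  by apply: mulr_ge0; exact: sqr_ge0.
exists (eps ^+ 2 / (2 * M + 1)).
  by apply: divr_gt0; [exact: exprn_gt0 | lra].
move=> phi rho hphi hr _ hrho.
have [p0 p1] := andP hphi.
set del := eps ^+ 2 / (2 * M + 1).
have hdel : 2 * del * M < eps ^+ 2.
  rewrite /del.
  have h2M : 0 < 2 * M + 1 by lra.
  have : 2 * (eps ^+ 2 / (2 * M + 1)) * M = eps ^+ 2 * (2 * M / (2 * M + 1)).
    by field; apply/negP => /eqP; lra.
  move=> ->; rewrite gtr_pMr ?exprn_gt0 // ltr_pdivrMr //; lra.
rewrite ger0_norm ?sqrtr_ge0 // -(ger0_norm (ltW heps)) -sqrtr_sqr.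
rewrite ltr_sqrt ?exprn_gt0 //.
apply: le_lt_trans hdel.
rewrite mulr_sumr.
apply: ler_sum => k _.
have [r0 r1] := andP (hr k).
have hk : `|1 - rho k| < del := hrho k.
have hth := htheta k.
apply: (le_trans (@div_sq_anti R _ _ _ (numge0 rho k (hr k)) hth _)).
  have := dge0 rho phi k r0 p0; lra.
have key : 1 - rho k ^+ 2 <= 2 * del.
  have : 1 - rho k < del by have := ler_norm (1 - rho k); lra.
  nra.
have -> : 2 * del * (snu ^+ 2 * a k ^+ 2 / theta k ^+ 2) =
  2 * del * snu ^+ 2 * a k ^+ 2 / theta k ^+ 2 by rewrite !mulrA.
apply: ler_wpM2r; first by rewrite invr_ge0 sqr_ge0.
apply: ler_wpM2r; first exact: sqr_ge0.
apply: ler_wpM2r; first exact: sqr_ge0.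
exact: key.
Qed.
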